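(* Let $d\ge1$ and $n>2$ be integers. Then $\mathcal U(H(d,n))$ is the groupoid with one object $\ast$ and only the identity morphism $\mathrm{id}_\ast$, and $\varpi(H(d,n))$ is the trivial morphism-colored functor (sending every object to $\ast$, every morphism to $\mathrm{id}_\ast$, every color $a\in\{0,\dots,d\}$ to $\mathrm{id}_\ast$). Consequently, for every category $\mathcal C$, every morphism-colored functor from $H(d,n)$ to the discrete morphism-colored category $(\mathcal C,\mathrm{id})$ factors (uniquely) through this trivial morphism-colored functor; and for all integers $d,d'\ge1$ and $n,n'>2$ there is a one-to-one correspondence between morphism-colored functors $H(d,n)\to(\mathcal C,\mathrm{id})$ and morphism-colored functors $H(d',n')\to(\mathcal C,\mathrm{id})$.
   Context: A morphism-colored category is a pair $(\mathcal C,\lambda)$ where $\mathcal C$ is a category and $\lambda$ assigns to each morphism $f$ a color $\lambda(f)$, such that whenever $\lambda(g)=\lambda(f_1\circ f_2)$ there exist composable $g_1,g_2$ with $g=g_1\circ g_2$, $\lambda(g_i)=\lambda(f_i)$. $(\mathcal C,\mathrm{id})$ (each morphism colored by itself) is the discrete morphism-colored category. A morphism-colored functor $(F,\gamma):(\mathcal C,\lambda)\to(\mathcal C',\lambda')$ is a functor $F$ with a map $\gamma$ on colors such that $\gamma(\lambda(f))=\lambda'(F(f))$ for all morphisms $f$; composition is componentwise. For a small morphism-colored groupoid $(\mathcal G,\lambda)$ with $\lambda(f)=\lambda(g)\Rightarrow\lambda(f^{-1})=\lambda(g^{-1})$: $I_1=\lambda(\mathrm{Mor}\,\mathcal G)$,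 $\lambda_1$ the corestriction; $I_0=\{\lambda(\mathrm{id}_x)\}$, $\lambda_0(x)=\lambda(\mathrm{id}_x)$; $\overset{1}{\sim}$ on $I_1$ relates $\lambda(f_1\circ\cdots\circ f_l)$ and $\lambda(g_1\circ\cdots\circ g_l)$ for composable sequences with $\lambda(f_i)=\lambda(g_i)$ for all $i$ (an equivalence relation), with quotient $s_1:I_1\to\bar I_1$; $\overset{0}{\sim}$ on $I_0$ relates $\lambda_0(\mathrm{source} f)$, $\lambda_0(\mathrm{source} g)$ whenever $s_1\lambda_1(f)=s_1\lambda_1(g)$, with quotient $s_0:I_0\to\bar I_0$. $\mathcal U(\mathcal G,\lambda)$ is the groupoid with objects $\bar I_0$, morphisms $\bar I_1$, source/target of $s_1\lambda_1(f)$ being $s_0\lambda_0$ of source/target of $f$, composition $s_1\lambda_1(f)\circ s_1\lambda_1(g)=s_1\lambda_1(f\circ g)$; $\bar\lambda:\mathcal G\to\mathcal U(\mathcal G,\lambda)$ is $x\mapsto s_0\lambda_0(x)$, $f\mapsto s_1\lambda_1(f)$, and $\varpi(\mathcal G,\lambda)=(\bar\lambda,s_1)$. Hamming schemoid: let $G=(\mathbb Z/n\mathbb Z)^d$ and $w(x)=\#\{i:x_i\neq0\}$ the Hamming weight. $G/\!/G$ is the action groupoid: objects $G$, morphisms $G\times G$, where $(g,x)$ has source $x$ and target $g+x$, composition $(h,g+x)\circ(g,x)=(h+g,x)$, identity $\mathrm{id}_x=(0,x)$, inverse $(g,x)^{-1}=(-g,g+x)$. Let $\pi(g,x)=g$.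 Then $H(d,n)=(G/\!/G,\,w\circ\pi)$, a morphism-colored groupoid with colors in $\{0,\dots,d\}$ satisfying $w\circ\pi(f)=w\circ\pi(g)\Rightarrow w\circ\pi(f^{-1})=w\circ\pi(g^{-1})$. *)

(* Defs.v *)
From HB Require Import structures.
From mathcomp Require Import all_boot all_order all_algebra.
Set Implicit Arguments. Unset Strict Implicit. Unset Printing Implicit Defensive.
Import GRing.Theory.
Local Open Scope ring_scope.

Record Category := {
  Obj :> Type;
  Hom : Obj -> Obj -> Type;
  cid : forall a, Hom a a;
  ccomp : forall x y z, Hom y z -> Hom x y -> Hom x z;
  ccomp_id_l : forall a b (f : Hom a b), ccomp (cid b) f = f;
  ccomp_id_r : forall a b (f : Hom a b), ccomp f (cid a) = f;
  ccomp_assoc : forall a b c e (h : Hom c e) (g : Hom b c) (f : Hom a b),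
      ccomp h (ccomp g f) = ccomp (ccomp h g) f
}.
Arguments cid {_} _.
Arguments ccomp {_ _ _ _} _ _.

(* Colors of the discrete morphism-colored category (C, id): the morphisms of C,
   packaged with their source and target. *)
Definition Arr (C : Category) : Type := {a : C & {b : C & Hom a b}}.
Definition arr (C : Category) (a b : C) (f : Hom a b) : Arr C :=
  existT _ a (existT _ b f).

(* G = (Z/nZ)^d as row vectors (used only with n > 2). *)
Definition HG (d n : nat) := 'rV['Z_n]_d.
(* morphism (g, x) of the action groupoid G//G: source x, target g + x *)
Definition HMor (d n : nat) := (HG d n * HG d n)%type.
Definition hsrc d n (f : HMor d n) : HG d n := f.2.
Definition htgt d n (f : HMor d n) : HG d n := f.1 + f.2.
Definition hid d n (x : HG d n) : HMor d n := (0, x).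
(* composition h o f, meaningful when hsrc h = htgt f *)
Definition hcomp d n (h f : HMor d n) : HMor d n := (h.1 + f.1, f.2).

Definition hweight d n (v : HG d n) : nat := #|[set i : 'I_d | v ord0 i != 0]|.
Definition hcol d n (f : HMor d n) : 'I_d.+1 := inord (hweight f.1).

Definition I1 d n : {set 'I_d.+1} := [set hcol f | f : HMor d n].
Definition I0 d n : {set 'I_d.+1} := [set hcol (hid x) | x : HG d n].

(* [:: f1; ...; fl] is composable: source f_i = target f_(i+1) *)
Definition hlink d n (f g : HMor d n) : bool := hsrc f == htgt g.
Fixpoint hcompseq d n (f : HMor d n) (fs : seq (HMor d n)) : HMor d n :=
  match fs with
  | [::] => f
  | g :: gs => hcomp f (hcompseq g gs)
  end.

Definition rel1 d n (a b : 'I_d.+1) : Prop :=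
  exists (f : HMor d n) fs g gs,
    [/\ sorted (@hlink d n) (f :: fs), sorted (@hlink d n) (g :: gs),
        map (@hcol d n) (f :: fs) = map (@hcol d n) (g :: gs),
        hcol (hcompseq f fs) = a & hcol (hcompseq g gs) = b].
Arguments rel1 : clear implicits.

Definition rel0 d n (a b : 'I_d.+1) : Prop :=
  exists f g : HMor d n,
    [/\ rel1 d n (hcol f) (hcol g), hcol (hid (hsrc f)) = a & hcol (hid (hsrc g)) = b].
Arguments rel0 : clear implicits.
Arguments I0 : clear implicits.
Arguments I1 : clear implicits.

Record MCFun (d n : nat) (C : Category) := {
  Fo : HG d n -> C;
  Fm : forall f : HMor d n, Hom (Fo (hsrc f)) (Fo (htgt f));
  gam : 'I_d.+1 -> Arr C;
  Fm_id : forall x, arr (Fm (hid x)) = arr (cid (Fo x));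
  (* composition of (k, g + x) after (g, x); these are all composable pairs *)
  Fm_comp : forall k g x : HG d n,
      arr (Fm (hcomp (k, g + x) (g, x))) = arr (ccomp (Fm (k, g + x)) (Fm (g, x)));
  gam_col : forall f, gam (hcol f) = arr (Fm f)
}.

(* Main.v *)
Require Import Defs.
From HB Require Import structures.
From mathcomp Require Import all_boot all_order all_algebra.
Set Implicit Arguments. Unset Strict Implicit. Unset Printing Implicit Defensive.
Import GRing.Theory.
Local Open Scope ring_scope.
Lemma two_nz n : (2 < n)%N -> (1 + 1 : 'Z_n) != 0.
Proof. by case: n => [|[|[|p]]]. Qed.
Lemma card_cnt d (P : nat -> bool) : #|[set i : 'I_d | P i]| = count P (iota 0 d).
Proof. by rewrite cardsE cardE size_filter -val_enum_ord count_map enumT. Qed.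
From mathcomp Require Import zify.
Lemma cnt_int a b d : (a <= b)%N -> count (fun i => (a <= i) && (i < b))%N (iota 0 d) = (minn d b - minn d a)%N.
Proof.
move=> ab; elim: d => [|d IH]; first by rewrite /= !min0n.
rewrite -addn1 iotaD count_cat IH /= add0n addn0.
case: leqP; case: ltnP => //= *; lia.
Qed.
Lemma hw_cnt d n (v : HG d n) (P : nat -> bool) :
  (forall i : 'I_d, (v ord0 i != 0) = P i) -> hweight v = count P (iota 0 d).
Proof.
move=> H; rewrite /hweight -card_cnt; apply: eq_card => i; by rewrite !inE H.
Qed.
Lemma hw_opp d n (v : HG d n) : hweight (- v) = hweight v.
Proof. rewrite /hweight; apply: eq_card => i; by rewrite !inE mxE oppr_eq0. Qed.
Lemma hw0 d n : hweight (0 : HG d n) = 0%N.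
Proof. rewrite (@hw_cnt d n 0 pred0) ?count_pred0 // => i; by rewrite mxE eqxx. Qed.

Definition xv d n (m : nat) : HG d n := \row_(i < d) (if (i < m)%N then 1 else 0).
Definition yv d n (m c : nat) : HG d n :=
  \row_(i < d) (if (i < m - c)%N then -1 else if (i < m)%N then 1 else 0).

Lemma minn_le d m : (m <= d)%N -> minn d m = m.
Proof. move=> *; lia. Qed.

Lemma hw_xv d n m : (m <= d)%N -> hweight (xv d n m) = m.
Proof.
move=> md; rewrite (@hw_cnt _ _ _ (fun i => (0 <= i) && (i < m))%N) ?cnt_int //.
  by rewrite minn0 subn0 minn_le.
move=> i; rewrite mxE /=; case: ifP => _; by rewrite ?oner_eq0 ?eqxx.
Qed.
Lemma hw_yv d n m c : (m <= d)%N -> hweight (yv d n m c) = m.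
Proof.
move=> md; rewrite (@hw_cnt _ _ _ (fun i => (0 <= i) && (i < m))%N) ?cnt_int //.
  by rewrite minn0 subn0 minn_le.
move=> i; rewrite mxE /=; case: ifP => h1; first by rewrite oppr_eq0 oner_eq0; lia.
case: ifP => _; by rewrite ?oner_eq0 ?eqxx.
Qed.
Lemma hw_xy d n m c : (2 < n)%N -> (c <= m)%N -> (m <= d)%N ->
  hweight (yv d n m c + xv d n m) = c.
Proof.
move=> n2 cm md; rewrite (@hw_cnt _ _ _ (fun i => (m - c <= i) && (i < m))%N) ?cnt_int ?leq_subr //.
  rewrite !minn_le; lia.
move=> i; rewrite !mxE /=; case: ifP => h1.
  have -> : (i < m)%N by lia.
  rewrite addNr eqxx; lia.
case: ifP => h2; last by rewrite addr0 eqxx; lia.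
rewrite two_nz //; lia.
Qed.
Lemma hw_2x d n m : (2 < n)%N -> (m <= d)%N -> hweight (xv d n m + xv d n m) = m.
Proof.
move=> n2 md; rewrite (@hw_cnt _ _ _ (fun i => (0 <= i) && (i < m))%N) ?cnt_int //.
  by rewrite minn0 subn0 minn_le.
move=> i; rewrite !mxE /=; case: ifP => _; by rewrite ?two_nz ?addr0 ?eqxx.
Qed.
Lemma inord_hw d n (v : HG d n) (k : 'I_d.+1) : hweight v = k -> inord (hweight v) = k.
Proof. move=> ->; exact: inord_val. Qed.

Lemma rel1_all d n (a b : 'I_d.+1) : (2 < n)%N -> rel1 d n a b.
Proof.
move=> n2; have ad := ltn_ord a; have bd := ltn_ord b.
set m := maxn a b.
have md : (m <= d)%N by rewrite /m; lia.
exists (yv d n m a, xv d n m + 0), [:: (xv d n m, 0)],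
       (yv d n m b, xv d n m + 0), [:: (xv d n m, 0)].
split => //=.
- by rewrite /hlink eqxx.
- by rewrite /hlink eqxx.
- by rewrite /hcol /= !hw_yv.
- apply: inord_hw; rewrite /= hw_xy //; rewrite /m; lia.
- apply: inord_hw; rewrite /= hw_xy //; rewrite /m; lia.
Qed.

Lemma hcol_hid d n (x : HG d n) : hcol (hid x) = ord0.
Proof. by apply: val_inj; rewrite /hcol /= hw0 inordK. Qed.

Lemma part1 d n : (2 < n)%N ->
  [/\ I0 d n = [set ord0], I1 d n = [set: 'I_d.+1],
      (forall a b, a \in I0 d n -> b \in I0 d n -> rel0 d n a b) &
      (forall a b, a \in I1 d n -> b \in I1 d n -> rel1 d n a b)].
Proof.
move=> n2; have I0E : I0 d n = [set ord0].
  apply/setP => a; rewrite inE; apply/imsetP/eqP => [[x _ ->]|->].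
    exact: hcol_hid.
  by exists 0 => //; rewrite hcol_hid.
split => //.
- apply/setP => a; rewrite inE; apply/imsetP.
  exists (xv d n a, 0) => //; rewrite /hcol /=; symmetry; apply: inord_hw; rewrite hw_xv //; rewrite -ltnS; exact: ltn_ord a.
- move=> a b; rewrite I0E !inE => /eqP -> /eqP ->.
  exists (hid 0), (hid 0); split; rewrite ?hcol_hid //; exact: rel1_all.
- move=> a b _ _; exact: rel1_all.
Qed.
From Stdlib Require Import Eqdep.
Lemma comp_congr (C : Category) (a b b' x : C) (g : Defs.Hom a b) (g' : Defs.Hom a b') (f : Defs.Hom x a) :
  arr g = arr g' -> arr (ccomp g f) = arr (ccomp g' f).
Proof.
rewrite /arr => H; have {}H := EqdepTheory.inj_pair2 _ _ _ _ _ H.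
pose Phi (u : {b & Defs.Hom a b}) := arr (ccomp (projT2 u) f).
exact: (congr1 Phi H).
Qed.

Lemma part2 d n C (F : MCFun d n C) : (2 < n)%N ->
  (forall x, Fo F x = Fo F 0) /\ (forall a, gam F a = arr (cid (Fo F 0))).
Proof.
move=> n2.
have hg0 : forall x, gam F ord0 = arr (cid (Fo F x)).
  by move=> x; rewrite -(hcol_hid x) gam_col Fm_id.
split.
  move=> x; have := hg0 x; rewrite (hg0 0) => /(congr1 (@projT1 _ _)) /= ->. by [].
move=> a; have md : (a <= d)%N by rewrite -ltnS; exact: ltn_ord a.
set x := xv d n a.
have e1 := Fm_comp F x x 0.
have e2 := Fm_comp F (-x) x 0.
have c1 : gam F a = arr (Fm F (x, x + 0)).
  rewrite -gam_col; congr gam; rewrite /hcol /=; symmetry; apply: inord_hw; exact: hw_xv.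
have c2 : gam F a = arr (Fm F (-x, x + 0)).
  rewrite -gam_col; congr gam; rewrite /hcol /=; symmetry; apply: inord_hw.
  rewrite hw_opp; exact: hw_xv.
have c3 : gam F a = arr (Fm F (hcomp (x, x + 0) (x, 0))).
  rewrite -gam_col; congr gam; rewrite /hcol /=; symmetry; apply: inord_hw.
  exact: hw_2x.
have c4 : gam F ord0 = arr (Fm F (hcomp (-x, x + 0) (x, 0))).
  rewrite -gam_col; congr gam; rewrite /hcol /= addNr.
  by apply: val_inj; rewrite /= hw0 inordK.
rewrite c3 e1 (comp_congr (Fm F (x, 0)) (etrans (esym c1) c2)) -e2 -c4.
exact: hg0.
Qed.
From Stdlib Require Import FunctionalExtensionality ProofIrrelevance.
Definition mk d n (C : Category) (c : C) : MCFun d n C.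
Proof.
refine (@Build_MCFun d n C (fun _ => c) (fun _ => cid c) (fun _ => arr (cid c)) _ _ _) => //.
move=> *; by rewrite ccomp_id_l.
Defined.

Lemma mk_eq d n C (F : MCFun d n C) : (2 < n)%N -> F = mk d n (Fo F 0).
Proof.
move=> n2; have [h1 h2] := part2 F n2.
have h3 : forall f, arr (Fm F f) = arr (cid (Fo F 0)) by move=> f; rewrite -gam_col h2.
move: h1 h2 h3; case: F => Fo0 Fm0 gam0 p1 p2 p3 /= h1 h2 h3.
set c := Fo0 0 in h1 h2 h3 *; clearbody c.
have E : Fo0 = fun _ => c by apply: functional_extensionality.
subst Fo0.
have E : Fm0 = fun _ => cid c.
  apply: functional_extensionality_dep => f.
  have := h3 f; rewrite /arr => H.
  have {}H := EqdepTheory.inj_pair2 _ _ _ _ _ H.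
  exact: (EqdepTheory.inj_pair2 _ _ _ _ _ H).
subst Fm0.
have E : gam0 = fun _ => arr (cid c) by apply: functional_extensionality.
subst gam0.
rewrite /mk /=; f_equal; apply: proof_irrelevance.
Qed.
Local Close Scope ring_scope.
Theorem mainTheorem10 (d n : nat) (hd : (1 <= d)%N) (hn : (2 < n)%N) :
  (* U(H(d,n)) has a single object and a single (identity) morphism *)
  [/\ I0 d n = [set ord0], I1 d n = [set: 'I_d.+1],
      (forall a b, a \in I0 d n -> b \in I0 d n -> rel0 d n a b) &
      (forall a b, a \in I1 d n -> b \in I1 d n -> rel1 d n a b)]
  /\
  (* every morphism-colored functor to (C, id) factors uniquely through the
     trivial one: the factor U(H(d,n)) -> (C,id) is determined by an object c *)
  (forall (C : Category) (F : MCFun d n C),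
     exists c : C,
       ((forall x, Fo F x = c) /\ (forall f, arr (Fm F f) = arr (cid c)) /\
        (forall a, gam F a = arr (cid c)))
       /\ forall c' : C,
         ((forall x, Fo F x = c') /\ (forall f, arr (Fm F f) = arr (cid c')) /\
          (forall a, gam F a = arr (cid c'))) -> c' = c)
  /\
  (* one-to-one correspondence between functors from H(d,n) and from H(d',n') *)
  (forall (d' n' : nat), (1 <= d')%N -> (2 < n')%N -> forall C : Category,
     exists (phi : MCFun d n C -> MCFun d' n' C) (psi : MCFun d' n' C -> MCFun d n C),
       cancel phi psi /\ cancel psi phi).
Proof.
split; first exact: part1.
split.
  move=> C F; have [h1 h2] := part2 F hn.
  exists (Fo F 0%R); split.
    split => //; split => // f; by rewrite -gam_col h2.
  by move=> c' [H _]; rewrite -(H 0%R).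
move=> d' n' _ hn' C.
exists (fun F => mk d' n' (Fo F 0%R)), (fun G => mk d n (Fo G 0%R)).
split => F /=.
  by rewrite [RHS](mk_eq F hn).
by rewrite [RHS](mk_eq F hn').
Qed.
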